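(* Let $\rho_{L_AA'B'L_B}$ be a state, with $L_A,L_B$ finite-dimensional of arbitrary size, let $\mathcal{N}_{A'B'\to AB}$ be a bipartite quantum channel, and let $\omega_{L_AABL_B}=\mathcal{N}_{A'B'\to AB}(\rho_{L_AA'B'L_B})$. Then $$E_\kappa(L_AA;BL_B)_\omega\le E_\kappa(L_AA';B'L_B)_\rho+E_\kappa(\mathcal{N}).$$
   Context: $T_X$ is partial transpose on $X$. For a bipartite state $\rho_{CD}$, $E_\kappa(C;D)_\rho=\log W_\kappa(C;D)_\rho$ with $W_\kappa(C;D)_\rho=\inf\{\operatorname{Tr}S_{CD}: S_{CD}\ge0,\ -T_D(S_{CD})\le T_D(\rho_{CD})\le T_D(S_{CD})\}$. For a bipartite channel $\mathcal{N}_{A'B'\to AB}$, its Choi operator is $J^{\mathcal{N}}_{L'_AABL'_B}=\mathcal{N}(|\Upsilon\rangle\langle\Upsilon|_{L'_AA'}\otimes|\Upsilon\rangle\langle\Upsilon|_{B'L'_B})$, $|\Upsilon\rangle_{XY}=\sum_i|i\rangle_X|i\rangle_Y$, $L'_A\simeq A'$, $L'_B\simeq B'$, and $E_\kappa(\mathcal{N})=\log\Gamma_\kappa(\mathcal{N})$ with $\Gamma_\kappa(\mathcal{N})=\inf\{\|\operatorname{Tr}_{AB}Q_{L'_AABL'_B}\|_\infty: Q\ge0,\ -T_{BL'_B}(Q)\le T_{BL'_B}(J^{\mathcal{N}})\le T_{BL'_B}(Q)\}$. *)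

(* Defs.v *)
From HB Require Import structures.
From mathcomp Require Import all_boot all_order all_algebra.
Set Implicit Arguments. Unset Strict Implicit. Unset Printing Implicit Defensive.
Import Order.TTheory GRing.Theory Num.Theory.
Local Open Scope ring_scope.

Section Defs.
Variable R : numClosedFieldType.

(* Operators on the Hilbert space C^T, T a finite index type, as matrices
   indexed by T. Composite systems X Y are indexed by pairs X * Y. *)
Definition op (T : finType) := T -> T -> R.

Definition trace (T : finType) (X : op T) : R := \sum_(i : T) X i i.

Definition psd (T : finType) (X : op T) : Prop :=
  forall v : T -> R, 0 <= \sum_(i : T) \sum_(j : T) Num.conj (v i) * X i j * v j.

Definition opsub (T : finType) (X Y : op T) : op T := fun i j => X i j - Y i j.
Definition opadd (T : finType) (X Y : op T) : op T := fun i j => X i j + Y i j.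
Definition opopp (T : finType) (X : op T) : op T := fun i j => - X i j.

Definition loew (T : finType) (X Y : op T) : Prop := psd (opsub Y X).

Definition state (T : finType) (X : op T) : Prop := psd X /\ trace X = 1.

Definition ptD (C D : finType) (M : op (C * D)%type) : op (C * D)%type :=
  fun x y => M (x.1, y.2) (y.1, x.2).

Definition Wfeas (C D : finType) (rho : op (C * D)%type) (w : R) : Prop :=
  exists S : op (C * D)%type, psd S /\ loew (opopp (ptD S)) (ptD rho)
    /\ loew (ptD rho) (ptD S) /\ trace S = w.

Definition is_inf (P : R -> Prop) (x : R) : Prop :=
  (forall y, P y -> x <= y) /\ (forall z, (forall y, P y -> z <= y) -> z <= x).

Definition W_kappa (C D : finType) (rho : op (C * D)%type) (w : R) : Prop :=
  is_inf (Wfeas rho) w.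

(* Bipartite maps N : L(A'B') -> L(AB).  The action of id_{L_A} (x) N (x) id_{L_B}
   on an operator on (L_A * A') * (B' * L_B), giving one on (L_A * A) * (B * L_B). *)
Definition ext (A' B' A B LA LB : finType) (N : op (A' * B')%type -> op (A * B)%type)
  (X : op ((LA * A') * (B' * LB))%type) : op ((LA * A) * (B * LB))%type :=
  fun x y =>
    N (fun u u' => X ((x.1.1, u.1), (u.2, x.2.2)) ((y.1.1, u'.1), (u'.2, y.2.2)))
      (x.1.2, x.2.1) (y.1.2, y.2.1).

Definition linear_map (S T : finType) (N : op S -> op T) : Prop :=
  (forall X Y, N (opadd X Y) = opadd (N X) (N Y)) /\
  (forall (c : R) X, N (fun i j => c * X i j) = fun i j => c * N X i j).

(* quantum channel (CPTP): linear, completely positive (id (x) N (x) id is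
   positive for all finite reference systems on either side), trace preserving *)
Definition channel (A' B' A B : finType) (N : op (A' * B')%type -> op (A * B)%type) : Prop :=
  linear_map N /\
  (forall (LA LB : finType) (X : op ((LA * A') * (B' * LB))%type), psd X -> psd (ext N X)) /\
  (forall X, trace (N X) = trace X).

(* |Upsilon><Upsilon|_{L'_A A'} (x) |Upsilon><Upsilon|_{B' L'_B}, on (L'_A * A') * (B' * L'_B) *)
Definition UpsUps (A' B' : finType) : op ((A' * A') * (B' * B'))%type :=
  fun x y => ((x.1.1 == x.1.2) && (y.1.1 == y.1.2) && (x.2.1 == x.2.2)
               && (y.2.1 == y.2.2))%:R.

Definition choi (A' B' A B : finType) (N : op (A' * B')%type -> op (A * B)%type)
  : op ((A' * A) * (B * B'))%type := ext N (@UpsUps A' B').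

Definition trAB (A' B' A B : finType) (Q : op ((A' * A) * (B * B'))%type) : op (A' * B')%type :=
  fun x y => \sum_(a : A) \sum_(b : B) Q ((x.1, a), (b, x.2)) ((y.1, a), (b, y.2)).

Definition sqnorm (T : finType) (v : T -> R) : R := \sum_(i : T) `|v i| ^+ 2.
Definition apply (T : finType) (X : op T) (v : T -> R) : T -> R :=
  fun i => \sum_(j : T) X i j * v j.

Definition opnorm_bound (T : finType) (X : op T) (g : R) : Prop :=
  0 <= g /\ forall v, sqnorm (apply X v) <= g ^+ 2 * sqnorm v.
Definition is_opnorm (T : finType) (X : op T) (g : R) : Prop :=
  opnorm_bound X g /\ forall g', opnorm_bound X g' -> g <= g'.

Definition Gfeas (A' B' A B : finType) (N : op (A' * B')%type -> op (A * B)%type) (g : R) : Prop :=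
  exists Q : op ((A' * A) * (B * B'))%type, psd Q /\
    loew (opopp (ptD Q)) (ptD (choi N)) /\ loew (ptD (choi N)) (ptD Q) /\
    is_opnorm (trAB Q) g.

Definition Gamma_kappa (A' B' A B : finType) (N : op (A' * B')%type -> op (A * B)%type) (g : R) : Prop :=
  is_inf (Gfeas N) g.

End Defs.

(* Main.v *)
Require Import Defs.
From HB Require Import structures.
From mathcomp Require Import all_boot all_order all_algebra.
From mathcomp Require Import ring.
Import Order.TTheory GRing.Theory Num.Theory.
Local Open Scope ring_scope.
From Stdlib Require Import FunctionalExtensionality Classical.
Set Implicit Arguments. Unset Strict Implicit. Unset Printing Implicit Defensive.

Section Aux.
Variable R : numClosedFieldType.

Lemma cjD (x y : R) : (x + y)^* = x^* + y^*. Proof. exact: rmorphD. Qed.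
Lemma cjB (x y : R) : (x - y)^* = x^* - y^*. Proof. exact: rmorphB. Qed.
Lemma cjM (x y : R) : (x * y)^* = x^* * y^*. Proof. exact: rmorphM. Qed.
Lemma cjN (x : R) : (- x)^* = - x^*. Proof. exact: rmorphN. Qed.
Lemma cj1 : (1 : R)^* = 1. Proof. exact: rmorph1. Qed.
Lemma cjnat n : (n%:R : R)^* = n%:R. Proof. exact: rmorph_nat. Qed.
Lemma cjsum (I : Type) (r : seq I) (P : pred I) (F : I -> R) :
  (\sum_(i <- r | P i) F i)^* = \sum_(i <- r | P i) (F i)^*.
Proof. exact: rmorph_sum. Qed.

Definition bf (T : finType) (X : op R T) (u w : T -> R) : R :=
  \sum_i \sum_j (u i)^* * X i j * w j.

Lemma sum_delta (T : finType) (i : T) (F : T -> R) : \sum_k (k == i)%:R * F k = F i.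
Proof.
rewrite (bigD1 i) //= eqxx mul1r big1 ?addr0 // => k /negbTE ->; by rewrite mul0r.
Qed.

Lemma sum_deltar (T : finType) (i : T) (F : T -> R) : \sum_k F k * (k == i)%:R = F i.
Proof. rewrite -[RHS](sum_delta i); apply eq_bigr => k _; by rewrite mulrC. Qed.

Lemma bfDl (T : finType) (X : op R T) (u1 u2 w : T -> R) :
  bf X (fun k => u1 k + u2 k) w = bf X u1 w + bf X u2 w.
Proof.
rewrite /bf -big_split /=; apply eq_bigr => i _; rewrite -big_split; apply eq_bigr => j _ /=.
by rewrite cjD !mulrDl.
Qed.

Lemma bfDr (T : finType) (X : op R T) (u w1 w2 : T -> R) :
  bf X u (fun k => w1 k + w2 k) = bf X u w1 + bf X u w2.
Proof.
rewrite /bf -big_split /=; apply eq_bigr => i _; rewrite -big_split; apply eq_bigr => j _ /=.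
by rewrite mulrDr.
Qed.

Lemma bf_deltal (T : finType) (X : op R T) (c : R) (i : T) (w : T -> R) :
  bf X (fun k => c * (k == i)%:R) w = c^* * \sum_j X i j * w j.
Proof.
rewrite /bf (eq_bigr (fun k => (k == i)%:R * (c^* * \sum_j X k j * w j))) ?sum_delta // => k _.
rewrite !mulr_sumr; apply eq_bigr => j _; rewrite cjM cjnat; ring.
Qed.

Lemma bf_delta2 (T : finType) (X : op R T) (c d : R) (i j : T) :
  bf X (fun k => c * (k == i)%:R) (fun k => d * (k == j)%:R) = c^* * X i j * d.
Proof.
rewrite bf_deltal (eq_bigr (fun l => (X i l * d) * (l == j)%:R)) ?sum_deltar ?mulrA // => l _.
ring.
Qed.

Lemma psd_diag (T : finType) (X : op R T) i : psd X -> 0 <= X i i.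
Proof.
move=> /(_ (fun k => 1 * (k == i)%:R)); rewrite -/(bf X _ _) bf_delta2.
by rewrite cj1 mul1r mulr1.
Qed.

Lemma psd_herm (T : finType) (X : op R T) i j : psd X -> X j i = (X i j)^*.
Proof.
move=> hX.
have [->|nij] := eqVneq i j; first by rewrite geC0_conj // psd_diag.
have Q c : 0 <= c^* * c * X i i + c^* * X i j + X j i * c + X j j.
  have := hX (fun k => c * (k == i)%:R + 1 * (k == j)%:R).
  rewrite -/(bf X _ _) bfDl !bfDr !bf_delta2 cj1.
  by have -> : c^* * c * X i i + c^* * X i j + X j i * c + X j j = c^* * X i i * c + c^* * X i j * 1 + (1 * X j i * c + 1 * X j j * 1) by ring.
have rii := ger0_real (psd_diag i hX).
have rjj := ger0_real (psd_diag j hX).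
have r1 := ger0_real (Q 1).
have r2 := ger0_real (Q 'i).
rewrite cj1 !mul1r !mulr1 in r1.
rewrite conjCi mulNr -expr2 sqrCi opprK mul1r in r2.
have a1 : X i j + X j i \is Num.real.
  have -> : X i j + X j i = (X i i + X i j + X j i + X j j) - X i i - X j j by ring.
  by rewrite !rpredB.
have a2 : - 'i * X i j + X j i * 'i \is Num.real.
  have -> : - 'i * X i j + X j i * 'i = (X i i + - 'i * X i j + X j i * 'i + X j j) - X i i - X j j by ring.
  by rewrite !rpredB.
move: a1 a2; rewrite !CrealE !cjD !cjM !cjN conjCi opprK => /eqP e1 /eqP e2.
set x := X i j in e1 e2 *; set y := X j i in e1 e2 *; set p := x^* in e1 e2 *; set q := y^* in e1 e2 *.
have E1 : x + y - p - q = 0 by rewrite -e1; ring.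
have E2 : y - x - p + q = 0.
  have : 'i * (y - x - p + q) = 0.
    have -> : 'i * (y - x - p + q) = (- 'i * x + y * 'i) - ('i * p + q * - 'i) by ring.
    by rewrite -e2 subrr.
  by move/eqP; rewrite mulf_eq0 (negbTE (neq0Ci R)) /= => /eqP.
have h2 : 2 * (y - p) = 0.
  have -> : 2 * (y - p) = (x + y - p - q) + (y - x - p + q) by ring.
  by rewrite E1 E2 addr0.
move/eqP: h2; rewrite mulf_eq0 pnatr_eq0 /= subr_eq0 => /eqP.
by [].
Qed.


Lemma cjV (x : R) : (x^-1)^* = (x^*)^-1. Proof. exact: fmorphV. Qed.

Lemma bf_deltar (T : finType) (X : op R T) (u : T -> R) (c : R) (j : T) :
  bf X u (fun k => c * (k == j)%:R) = (\sum_i (u i)^* * X i j) * c.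
Proof.
rewrite /bf mulr_suml; apply eq_bigr => i _.
rewrite (eq_bigr (fun l => ((u i)^* * X i l * c) * (l == j)%:R)) ?sum_deltar // => l _; ring.
Qed.

Lemma psd_2pt (T : finType) (X : op R T) i j c : psd X -> i != j ->
  0 <= c^* * c * X i i + c^* * X i j + X j i * c + X j j.
Proof.
move=> hX nij.
have := hX (fun k => c * (k == i)%:R + 1 * (k == j)%:R).
rewrite -/(bf X _ _) bfDl !bfDr !bf_delta2 cj1.
by have -> : c^* * c * X i i + c^* * X i j + X j i * c + X j j = c^* * X i i * c + c^* * X i j * 1 + (1 * X j i * c + 1 * X j j * 1) by ring.
Qed.

Lemma psd_row0 (T : finType) (X : op R T) i j : psd X -> X i i = 0 -> X i j = 0.
Proof.
move=> hX h0.
have [<-//|nij] := eqVneq i j.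
apply/eqP/negPn/negP => a0.
set a := X i j.
set n := a * a^*.
have n0 : 0 < n by rewrite mul_conjC_gt0.
have jj := psd_diag j hX.
set k := (X j j + 1) / (2 * n).
have k0 : 0 <= k by rewrite divr_ge0 // ?addr_ge0 // mulr_ge0 // ltW.
have := psd_2pt (- a * k) hX nij.
rewrite h0 mulr0 add0r (psd_herm i j hX) -/a cjM cjN (geC0_conj k0).
have -> : (- a^* * k) * a + a^* * (- a * k) + X j j = X j j - 2 * n * k by rewrite /n; ring.
have nn : n != 0 by rewrite gt_eqF.
have -> : X j j - 2 * n * k = -1.
  by rewrite /k; field.
by rewrite ler0N1.
Qed.

Lemma psd_step (T : finType) (X : op R T) i0 : psd X -> 0 < X i0 i0 ->
  psd (fun i j => X i j - X i i0 * X i0 j / X i0 i0).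
Proof.
move=> hX d0 v.
set d := X i0 i0.
set a := \sum_j X i0 j * v j.
set b := \sum_i (v i)^* * X i i0.
have hb : b = a^*.
  rewrite /b /a cjsum; apply eq_bigr => i _; by rewrite cjM (psd_herm i0 i hX) mulrC.
have e1 : bf (fun i j => X i j - X i i0 * X i0 j / d) v v = bf X v v - b * a / d.
  rewrite /bf /b /a mulr_suml mulr_suml -sumrB; apply eq_bigr => i _.
  rewrite mulr_sumr mulr_suml -sumrB; apply eq_bigr => j _; ring.
set t := - a / d.
have := hX (fun k => v k + t * (k == i0)%:R).
rewrite -/(bf X _ _) bfDl !bfDr bf_deltar bf_deltal bf_delta2 -/a -/b.
rewrite -/(bf X _ _) -/(bf _ _ _) e1 hb /t cjM cjN cjV (geC0_conj (ltW d0)).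
have dn : d != 0 by rewrite gt_eqF.
suff -> : bf X v v + a^* * (- a / d) + ((- a^* / d) * a + (- a^* / d) * d * (- a / d))
  = bf X v v - a^* * a / d by [].
by field.
Qed.


Lemma psd_zero (T : finType) (X : op R T) : psd X -> (forall i, X i i = 0) ->
  exists s : seq (T -> R), forall i j, X i j = \sum_(w <- s) w i * (w j)^*.
Proof. by move=> hX h; exists [::] => i j; rewrite big_nil (psd_row0 j hX (h i)). Qed.

Lemma psd_decomp (T : finType) (X : op R T) : psd X ->
  exists s : seq (T -> R), forall i j, X i j = \sum_(w <- s) w i * (w j)^*.
Proof.
move=> hX; move: (leqnn #|[pred i | X i i != 0]|).
move: {2}#|[pred i | X i i != 0]| => n.
elim: n X hX => [|n IH] X hX hn.
  refine (psd_zero hX _) => i.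
  move: hn; rewrite leqn0 => /eqP/card0_eq/(_ i).
  by rewrite !inE => /negbFE/eqP.
case: (pickP [pred i | X i i != 0]) => [i0 hi0 | h0]; last first.
  refine (psd_zero hX _) => i; by move: (h0 i) => /= /negbFE/eqP.
have d0 : 0 < X i0 i0 by rewrite lt_def psd_diag ?andbT; [exact: hi0 | exact: hX].
have hX' := psd_step hX d0.
set X' := (fun i j => _) in hX'.
have sub : [pred i | X' i i != 0] \subset [predD1 [pred i | X i i != 0] & i0].
  apply/subsetP => i; rewrite !inE /X'.
  have [-> | ni] := eqVneq i i0 => /=.
    by rewrite mulfK ?subrr ?eqxx // gt_eqF.
  apply: contraNN => /eqP hii.
  by rewrite hii (psd_row0 i0 hX hii) !mul0r subrr.
have hn' : (#|[pred i | X' i i != 0%R]| <= n)%N.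
  apply: leq_trans (subset_leq_card sub) _.
  have hi0' : i0 \in [pred i | X i i != 0] by exact: hi0.
  by move: hn; rewrite [X in (X <= _)%N -> _](cardD1 i0) hi0' add1n ltnS.
have [s hs] := IH X' hX' hn'.
set sq := sqrtC (X i0 i0).
have sq0 : 0 < sq by rewrite sqrtC_gt0.
exists ((fun i => X i i0 / sq) :: s) => i j.
rewrite big_cons -hs /X' cjM cjV (geC0_conj (ltW sq0)) -(psd_herm j i0 hX).
have -> : X i0 i0 = sq * sq by rewrite -expr2 sqrtCK.
have sqn : sq != 0 by rewrite gt_eqF.
field.
by rewrite sqn.
Qed.


Lemma gram_psd (T : finType) (s : seq (T -> R)) (X : op R T) :
  (forall i j, X i j = \sum_(w <- s) w i * (w j)^*) -> psd X.
Proof.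
move=> h v.
under eq_bigr => i _ do under eq_bigr => j _ do rewrite h mulr_sumr mulr_suml.
under eq_bigr => i _ do rewrite exchange_big.
rewrite exchange_big; apply: sumr_ge0 => w _.
rewrite (_ : \sum_i _ = (\sum_i (v i)^* * w i) * (\sum_i (v i)^* * w i)^*) ?mul_conjC_ge0 //.
rewrite cjsum mulr_suml; apply eq_bigr => i _; rewrite mulr_sumr; apply eq_bigr => j _.
rewrite cjM conjCK; ring.
Qed.

Lemma psd_ext (T : finType) (X Y : op R T) : (forall i j, X i j = Y i j) -> psd X -> psd Y.
Proof.
move=> h hX v; have := hX v.
by under eq_bigr => i _ do under eq_bigr => j _ do rewrite h.
Qed.

Lemma psd_add (T : finType) (X Y : op R T) : psd X -> psd Y -> psd (fun i j => X i j + Y i j).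
Proof.
move=> hX hY v.
rewrite (_ : \sum_i _ = bf X v v + bf Y v v) ?addr_ge0 //; first exact: hX; first exact: hY.
rewrite /bf -big_split; apply eq_bigr => i _; rewrite -big_split; apply eq_bigr => j _ /=; ring.
Qed.

Lemma psd_pull (S T : finType) (f : S -> T) (P : op R T) : psd P -> psd (fun s t => P (f s) (f t)).
Proof.
move=> /psd_decomp [s hs]; apply: (@gram_psd _ (map (fun w => w \o f) s)) => i j.
by rewrite big_map hs.
Qed.

Lemma psd_schur (T : finType) (P K : op R T) : psd P -> psd K -> psd (fun s t => P s t * K s t).
Proof.
move=> /psd_decomp [s1 h1] /psd_decomp [s2 h2].
apply: (@gram_psd _ [seq (fun i => w i * u i) | w <- s1, u <- s2]) => i j.
rewrite big_allpairs_dep h1 h2 mulr_suml; apply eq_bigr => w _.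
rewrite mulr_sumr; apply eq_bigr => u _; rewrite cjM; ring.
Qed.

Lemma psd_fiber (Y U : finType) (M : op R (Y * U)%type) : psd M ->
  psd (fun x y => \sum_u \sum_u' M (x, u) (y, u')).
Proof.
move=> /psd_decomp [s hs].
apply: (@gram_psd _ (map (fun w => fun x => \sum_u w (x, u)) s)) => x y.
rewrite big_map.
rewrite (eq_bigr (fun u => \sum_u' \sum_(w <- s) w (x, u) * (w (y, u'))^*)); last by move=> u _; apply eq_bigr => u' _; rewrite hs.
under eq_bigr => u _ do rewrite exchange_big.
rewrite exchange_big; apply eq_bigr => w _.
rewrite cjsum mulr_suml; apply eq_bigr => u _; by rewrite mulr_sumr.
Qed.

Lemma psd_scale (T : finType) (c : R) (X : op R T) : 0 <= c -> psd X -> psd (fun i j => c * X i j).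
Proof.
move=> c0 hX v; have := mulr_ge0 c0 (hX v); rewrite mulr_sumr => h.
apply: le_trans h _; rewrite le_eqVlt; apply/orP; left; apply/eqP.
apply eq_bigr => i _; rewrite mulr_sumr; apply eq_bigr => j _; ring.
Qed.


Lemma sqnorm_ge0 (T : finType) (z : T -> R) : 0 <= sqnorm z.
Proof. by apply: sumr_ge0 => i _; rewrite exprn_ge0. Qed.

Lemma bf_apply (T : finType) (M : op R T) (z : T -> R) :
  bf M z z = \sum_i (z i)^* * apply M z i.
Proof. apply eq_bigr => i _; rewrite /apply mulr_sumr; apply eq_bigr => j _; ring. Qed.

Lemma qf_bound (T : finType) (M : op R T) (g : R) (z : T -> R) :
  psd M -> opnorm_bound M g -> bf M z z <= g * sqnorm z.
Proof.
move=> hM [g0 hg].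
set x := bf M z z; set n := sqnorm z; set m := sqnorm (apply M z).
have x0 : 0 <= x by exact: hM.
have n0 := sqnorm_ge0 z.
have hmn : m <= g ^+ 2 * n by exact: hg.
have [nz|npos] := eqVneq n 0.
  have zi : forall i, z i = 0.
    move=> i; have := psumr_eq0P (fun i _ => exprn_ge0 2 (normr_ge0 (z i))) nz (i := i) isT.
    by move/eqP; rewrite sqrf_eq0 normr_eq0 => /eqP.
  have -> : x = 0 by rewrite /x bf_apply big1 // => i _; rewrite zi conjC0 mul0r.
  by rewrite nz mulr0.
have n1 : 0 < n by rewrite lt_def npos n0.
have xr : x^* = x by rewrite geC0_conj.
set c := x / n.
have cr : c^* = c by rewrite /c cjM cjV xr (geC0_conj n0).
have key : sqnorm (fun i => apply M z i - c * z i) = m - x ^+ 2 / n.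
  rewrite /sqnorm /m /n /sqnorm.
  under eq_bigr => i _ do rewrite normCK cjB cjM cr.
  have -> : \sum_i (apply M z i - c * z i) * ((apply M z i)^* - c * (z i)^*) =
     \sum_i `|apply M z i| ^+ 2 - c * (\sum_i (z i)^* * apply M z i)
       - c * (\sum_i (z i)^* * apply M z i)^* + c * c * \sum_i `|z i| ^+ 2.
    rewrite cjsum !mulr_sumr -!sumrB -big_split /=; apply eq_bigr => i _.
    rewrite !normCK cjM conjCK; ring.
  rewrite -bf_apply -/x xr /c -/(sqnorm z) -/n; field; exact: npos.
have : 0 <= m - x ^+ 2 / n by rewrite -key sqnorm_ge0.
rewrite subr_ge0 ler_pdivrMr // => h.
have h2 : x ^+ 2 <= (g * n) ^+ 2.
  apply: le_trans h _; have -> : (g * n) ^+ 2 = (g ^+ 2 * n) * n by ring.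
  exact: ler_wpM2r.
by rewrite -ler_sqr ?nnegrE ?mulr_ge0.
Qed.

End Aux.

Lemma sum_pair (R : numClosedFieldType) (I J : finType) (F : (I * J)%type -> R) :
  \sum_p F p = \sum_i \sum_j F (i, j).
Proof. by rewrite pair_bigA; apply eq_bigr => -[i j] _. Qed.

Section Main.
Variable R : numClosedFieldType.
Variables LA A' B' LB A B : finType.
Local Notation X := ((LA * A') * (B' * LB))%type.
Local Notation Jt := ((A' * A) * (B * B'))%type.
Local Notation Y := ((LA * A) * (B * LB))%type.
Local Notation U := (A' * B')%type.

Definition al (x : Y) (u : U) : X := ((x.1.1, u.1), (u.2, x.2.2)).
Definition be (x : Y) (u : U) : Jt := ((u.1, x.1.2), (x.2.1, u.2)).
Definition link (P : op R X) (K : op R Jt) : op R Y :=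
  fun x y => \sum_u \sum_u' P (al x u) (al y u') * K (be x u) (be y u').

Lemma link_psd P K : psd P -> psd K -> psd (link P K).
Proof.
move=> hP hK.
exact: (psd_fiber (psd_schur (psd_pull (fun p : (Y * U)%type => al p.1 p.2) hP)
                             (psd_pull (fun p : (Y * U)%type => be p.1 p.2) hK))).
Qed.

Definition sw (p : (U * U)%type) : (U * U)%type := ((p.1.1, p.2.2), (p.2.1, p.1.2)).
Lemma sw_inj : injective sw.
Proof. by apply: (can_inj (g := sw)) => -[[a b] [c d]]. Qed.

Lemma link_ptD P K x y : ptD (link P K) x y = link (ptD P) (ptD K) x y.
Proof.
rewrite /ptD /link !pair_bigA (reindex_inj sw_inj); apply eq_bigr => -[[a b] [c d]] _.
by case: x y => [[? ?] [? ?]] [[? ?] [? ?]].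
Qed.

Lemma link_pm (P1 P2 : op R X) (K1 K2 : op R Jt) :
  psd (fun i j => P1 i j + P2 i j) -> psd (fun i j => P1 i j - P2 i j) ->
  psd (fun i j => K1 i j + K2 i j) -> psd (fun i j => K1 i j - K2 i j) ->
  psd (fun i j => link P1 K1 i j + link P2 K2 i j) /\ psd (fun i j => link P1 K1 i j - link P2 K2 i j).
Proof.
move=> h1 h2 h3 h4.
have h5 : (0 : R) <= 2^-1 by rewrite invr_ge0 ler0n.
split.
  apply: psd_ext (psd_scale h5 (psd_add (link_psd h1 h3) (link_psd h2 h4))) => i j.
  rewrite /link /= -!big_split mulr_sumr /=; apply eq_bigr => u _.
  rewrite -!big_split mulr_sumr; apply eq_bigr => u' _ /=; by field.
refine (psd_ext _ (psd_scale h5 (psd_add (link_psd h1 h4) (link_psd h2 h3)))) => i j.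
rewrite /link /= -big_split -sumrB mulr_sumr /=; apply eq_bigr => u _.
rewrite -big_split -sumrB mulr_sumr; apply eq_bigr => u' _ /=; by field.
Qed.


Lemma ex3 (I J K : finType) (F : I -> J -> K -> R) :
  \sum_i \sum_j \sum_k F i j k = \sum_k \sum_i \sum_j F i j k.
Proof.
rewrite (eq_bigr (fun i => \sum_k \sum_j F i j k)); last by move=> i _; rewrite exchange_big.
by rewrite exchange_big.
Qed.

Definition al2 (l1 : LA) (l2 : LB) (u : U) : X := ((l1, u.1), (u.2, l2)).

Lemma trace_link_eq P K : trace (link P K) =
  \sum_(l1 : LA) \sum_(l2 : LB) \sum_u \sum_u' P (al2 l1 l2 u) (al2 l1 l2 u') * trAB K u u'.
Proof.
rewrite /trace sum_pair sum_pair.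
rewrite (eq_bigr (fun l1 => \sum_a \sum_b \sum_l2 \sum_u \sum_u'
   P (al2 l1 l2 u) (al2 l1 l2 u') * K ((u.1, a), (b, u.2)) ((u'.1, a), (b, u'.2)))); last first.
  move=> l1 _; apply eq_bigr => a _; rewrite sum_pair; apply eq_bigr => b _.
  by apply eq_bigr => l2 _.
apply eq_bigr => l1 _; rewrite ex3; apply eq_bigr => l2 _.
rewrite ex3; apply eq_bigr => u _.
rewrite ex3; apply eq_bigr => u' _.
rewrite /trAB mulr_sumr; apply eq_bigr => a _; rewrite mulr_sumr; by apply eq_bigr.
Qed.

Lemma trace_al2 (P : op R X) :
  trace P = \sum_(l1 : LA) \sum_(l2 : LB) \sum_u P (al2 l1 l2 u) (al2 l1 l2 u).
Proof.
rewrite /trace sum_pair sum_pair; apply eq_bigr => l1 _.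
rewrite (eq_bigr (fun a => \sum_b \sum_l2 P (al2 l1 l2 (a, b)) (al2 l1 l2 (a, b)))); last first.
  move=> a _; rewrite sum_pair; by apply eq_bigr.
rewrite ex3; apply eq_bigr => l2 _; rewrite sum_pair; by apply eq_bigr.
Qed.

Lemma trace_link_le P K g : psd P -> psd K -> opnorm_bound (trAB K) g ->
  trace (link P K) <= g * trace P.
Proof.
move=> hP hK hg.
have hM : psd (trAB K).
  move=> v; rewrite /trAB.
  have -> : \sum_i \sum_j (v i)^* * (\sum_a \sum_b K ((i.1, a), (b, i.2)) ((j.1, a), (b, j.2))) * v j
    = \sum_a \sum_b bf (fun i j => K ((i.1, a), (b, i.2)) ((j.1, a), (b, j.2))) v v.
    transitivity (\sum_i \sum_j \sum_a \sum_b
       (v i)^* * K ((i.1, a), (b, i.2)) ((j.1, a), (b, j.2)) * v j).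
      apply eq_bigr => i _; apply eq_bigr => j _; rewrite mulr_sumr mulr_suml.
      by apply eq_bigr => a _; rewrite mulr_sumr mulr_suml.
    rewrite ex3; apply eq_bigr => a _; rewrite ex3; by apply eq_bigr.
  apply: sumr_ge0 => a _; apply: sumr_ge0 => b _.
  exact: (psd_pull (fun i : U => ((i.1, a), (b, i.2))) hK).
have [s hs] := psd_decomp hP.
rewrite trace_link_eq trace_al2 mulr_sumr; apply: ler_sum => l1 _.
rewrite mulr_sumr; apply: ler_sum => l2 _.
pose z := fun (w : X -> R) (u : U) => (w (al2 l1 l2 u))^*.
have e1 : \sum_u \sum_u' P (al2 l1 l2 u) (al2 l1 l2 u') * trAB K u u'
    = \sum_(w <- s) bf (trAB K) (z w) (z w).
  transitivity (\sum_u \sum_u' \sum_(w <- s) w (al2 l1 l2 u) * trAB K u u' * (w (al2 l1 l2 u'))^*).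
    apply eq_bigr => u _; apply eq_bigr => u' _; rewrite hs mulr_suml; apply eq_bigr => w _; ring.
  rewrite (eq_bigr (fun u => \sum_(w <- s) \sum_u' w (al2 l1 l2 u) * trAB K u u' * (w (al2 l1 l2 u'))^*)); last first.
    by move=> u _; rewrite exchange_big.
  rewrite exchange_big; apply eq_bigr => w _; rewrite /bf; apply eq_bigr => u _; apply eq_bigr => u' _.
  by rewrite /z conjCK.
have e2 : \sum_u P (al2 l1 l2 u) (al2 l1 l2 u) = \sum_(w <- s) sqnorm (z w).
  rewrite (eq_bigr (fun u => \sum_(w <- s) w (al2 l1 l2 u) * (w (al2 l1 l2 u))^*)); last by move=> u _; rewrite hs.
  rewrite exchange_big; apply eq_bigr => w _; apply eq_bigr => u _.
  by rewrite /z norm_conjC normCK.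
rewrite e1 e2 mulr_sumr; apply: ler_sum => w _; exact: qf_bound.
Qed.


Lemma N_sum (S T : finType) (N : op R S -> op R T) (hl : linear_map N) (I : Type) (r : seq I)
  (c : I -> R) (E : I -> op R S) :
  N (fun v v' => \sum_(i <- r) c i * E i v v') = fun p q => \sum_(i <- r) c i * N (E i) p q.
Proof.
elim: r => [|i r IH].
  have -> : (fun v v' => \sum_(i <- [::]) c i * E i v v') = (fun v v' => 0 * (fun _ _ => (0 : R)) v v').
    by apply: functional_extensionality => v; apply: functional_extensionality => v'; rewrite big_nil mul0r.
  rewrite hl.2; apply: functional_extensionality => p; apply: functional_extensionality => q.
  by rewrite big_nil mul0r.
have -> : (fun v v' => \sum_(j <- i :: r) c j * E j v v') =
   opadd (fun v v' => c i * E i v v') (fun v v' => \sum_(j <- r) c j * E j v v').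
  by apply: functional_extensionality => v; apply: functional_extensionality => v'; rewrite big_cons.
rewrite hl.1 hl.2 IH; apply: functional_extensionality => p; apply: functional_extensionality => q.
by rewrite big_cons.
Qed.

Definition Eu (p : (U * U)%type) : op R U := fun v v' => ((v == p.1) && (v' == p.2))%:R.

Lemma ext_link (N : op R U -> op R (A * B)%type) (rho : op R X) x y :
  linear_map N -> ext N rho x y = link rho (choi N) x y.
Proof.
move=> hl.
rewrite /ext.
have -> : (fun u u' => rho ((x.1.1, u.1), (u.2, x.2.2)) ((y.1.1, u'.1), (u'.2, y.2.2)))
   = (fun v v' => \sum_(p : (U * U)%type) rho (al x p.1) (al y p.2) * Eu p v v').
  apply: functional_extensionality => v; apply: functional_extensionality => v'.
  symmetry; rewrite sum_pair.
  transitivity (\sum_u (u == v)%:R * \sum_u' (u' == v')%:R * rho (al x u) (al y u')).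
    apply eq_bigr => u _; rewrite mulr_sumr; apply eq_bigr => u' _.
    rewrite /Eu /= [v == u]eq_sym [v' == u']eq_sym.
    by case: (u == v); case: (u' == v'); rewrite /= ?mul1r ?mul0r ?mulr1 ?mulr0.
  by rewrite sum_delta sum_delta.
rewrite N_sum // sum_pair /link; apply eq_bigr => u _; apply eq_bigr => u' _.
congr (_ * _).
rewrite /choi /ext /=; congr N.
apply: functional_extensionality => v; apply: functional_extensionality => v'.
rewrite /Eu /UpsUps /=.
case: u u' v v' => [u1 u2] [u1' u2'] [v1 v2] [v1' v2'] /=.
rewrite !xpair_eqE [u1 == v1]eq_sym [u1' == v1']eq_sym.
by case: (v1 == u1); case: (v2 == u2); case: (v1' == u1'); case: (v2' == u2').
Qed.

End Main.

Lemma trace_ge0 (R : numClosedFieldType) (T : finType) (M : op R T) : psd M -> 0 <= trace M.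
Proof. by move=> h; apply: sumr_ge0 => i _; apply: psd_diag. Qed.

Lemma trace_ptD (R : numClosedFieldType) (C D : finType) (M : op R (C * D)%type) :
  trace (ptD M) = trace M.
Proof. by apply eq_bigr => -[c d] _. Qed.

Lemma trace_sub (R : numClosedFieldType) (T : finType) (M K : op R T) :
  trace (fun i j => M i j - K i j) = trace M - trace K.
Proof. by rewrite /trace sumrB. Qed.

Theorem mainTheorem11 (R : numClosedFieldType) (LA A' B' LB A B : finType)
  (rho : op R ((LA * A') * (B' * LB))%type) (N : op R (A' * B')%type -> op R (A * B)%type)
  (hrho : state rho) (hN : channel N)
  (w_omega w_rho g : R) :
  W_kappa (ext N rho) w_omega -> W_kappa rho w_rho -> Gamma_kappa N g ->
  w_omega <= w_rho * g.
Proof.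
move=> [Wo1 Wo2] [Wr1 Wr2] [G1 G2].
case: hrho => hrho tr1.
case: hN => hlin [_ _].
(* feasible rho values are >= 1 *)
have spos : forall s, Wfeas rho s -> 0 < s.
  move=> s [S [hS [h1 [h2 <-]]]].
  have := trace_ge0 h2; rewrite /opsub trace_sub !trace_ptD tr1 subr_ge0 => h.
  by apply: lt_le_trans h; rewrite ltr01.
have key : forall s g', Wfeas rho s -> Gfeas N g' -> w_omega <= s * g'.
  move=> s g' [S [hS [h1 [h2 trS]]]] [Q [hQ [h3 [h4 [[g0 hg] _]]]]].
  have pm1 : psd (fun i j => ptD S i j + ptD rho i j).
    by apply: psd_ext h1 => i j; rewrite /opsub /opopp opprK addrC.
  have pm3 : psd (fun i j => ptD Q i j + ptD (choi N) i j).
    by apply: psd_ext h3 => i j; rewrite /opsub /opopp opprK addrC.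
  have [L1 L2] := link_pm pm1 h2 pm3 h4.
  have eo : forall i j, ptD (ext N rho) i j = link (ptD rho) (ptD (choi N)) i j.
    by move=> i j; rewrite -link_ptD /ptD ext_link.
  have es : forall i j, ptD (link S Q) i j = link (ptD S) (ptD Q) i j.
    by move=> i j; rewrite link_ptD.
  have feas : Wfeas (ext N rho) (trace (link S Q)).
    exists (link S Q); split; first exact: link_psd.
    split.
      apply: psd_ext L1 => i j; rewrite /opsub /opopp eo es opprK addrC //.
    split => //.
    by apply: psd_ext L2 => i j; rewrite /opsub eo es.
  apply: le_trans (Wo1 _ feas) _.
  rewrite -trS mulrC; exact: trace_link_le.
have g0 : 0 <= g.
  apply: G2 => y [Q [_ [_ [_ [[h _] _]]]]]; exact: h.
have lb : forall s, Wfeas rho s -> w_omega <= s * g.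
  move=> s hs; have s0 := spos s hs.
  rewrite -ler_pdivrMl //; apply: G2 => y hy.
  by rewrite ler_pdivrMl //; apply: key.
move: g0; rewrite le0r => /orP [/eqP g00 | gpos]; last first.
  have h0 : w_omega / g <= w_rho.
    apply: Wr2 => y hy; rewrite ler_pdivrMr //; exact: lb.
  by rewrite -ler_pdivrMr.
rewrite g00 mulr0.
case: (classic (exists s, Wfeas rho s)) => [[s hs] | ne].
  by have := lb s hs; rewrite g00 mulr0.
exfalso.
have : w_rho + 1 <= w_rho.
  apply: Wr2 => y hy; exfalso; apply: ne; by exists y.
by rewrite -subr_ge0 (_ : w_rho - (w_rho + 1) = -1) ?ler0N1 //; ring.
Qed.
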